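(* Let $\mathcal B\subset\mathbb N_{\geq2}$ be finite with $2\in\mathcal B$, let $t\in\mathcal B\setminus\{2\}$, let $p\geq2$ be an integer, and let $W\subset\mathcal B^{p}$ be a non-empty finite set of words of length $p$ none of whose last letter equals $2$. Let $(m(i))_{i\geq0}$ be positive integers and put $M_k=p\sum_{i=0}^k m(i)$; assume $M_k\geq\max\{\sum_{i=0}^{k-1}M_i,\ M_{k-1}/2\}$ for all $k\geq1$. Let $\lambda>0$, put $L=\max\{\max\mathcal B-2,\ p\}$, and let $\alpha\in(2,\infty)$ satisfy \[2(\alpha-2)\log\big(\sqrt2(L+1)\big)+(\alpha-2)\lambda\leq\frac{\lambda}{2}.\] Let $y\in(0,1)\setminus\mathbb Q$ be such that its BCF digit sequence $(b_n(y))_{n\geq1}$ is an infinite concatenation of words from $W$. Let $x(y)\in(0,1)\setminus\mathbb Q$ be the number whose BCF digit sequence is obtained from $(b_n(y))_{n\geq1}$ by inserting, for every $k\geq0$, immediately after the digit $b_{M_k}(y)$, a block consisting of $\lfloor\exp(\lambda M_k)\rfloor$ copies of $2$ followed by a single digit $t$ (with all other digits of $y$ kept in order). Then $x(y)\in G(\alpha)\cap F_{\mathcal B}$.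
   Context: For $x\in\mathbb R$, the irrationality exponent $\mu(x)$ is the supremum of the set of $\mu\in\mathbb R$ such that $|x-p/q|<q^{-\mu}$ holds for infinitely many $(p,q)\in\mathbb Z\times\mathbb N$ with $|p|$ and $q$ coprime. For $\alpha>2$, $G(\alpha)=\{x\in\mathbb R\setminus\mathbb Q:\mu(x)\geq\alpha\}$. Every irrational $x$ has a unique backward continued fraction (BCF) expansion $x=b_0(x)-\cfrac{1}{b_1(x)-\cfrac{1}{b_2(x)-\cdots}}$ with $b_0(x)=\lfloor x\rfloor+1$ and integers $b_n(x)\geq2$ for $n\geq1$; conversely every sequence of integers $\geq2$ is the BCF digit sequence of a unique number in $(0,1)\setminus\mathbb Q$ (with $b_0=1$). For a finite $\mathcal B\subset\mathbb N_{\geq2}$, $F_{\mathcal B}=\{x\in(0,1)\setminus\mathbb Q: b_n(x)\in\mathcal B\text{ for all }n\geq1\}$. *)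

(* Defs.v *)
From Stdlib Require Import Reals ZArith List.
From Coquelicot Require Import Coquelicot.
Open Scope R_scope.

Definition is_rational (x : R) : Prop :=
  exists (a b : Z), b <> 0%Z /\ x = IZR a / IZR b.

(** Backward continued fraction: remainders r_0 = x,
    r_{n+1} = 1 / (b_n - r_n), digits b_n = floor(r_n) + 1.
    ([up r] is the unique integer with r < up r <= r + 1, i.e. floor r + 1.) *)
Fixpoint bcf_rem (n : nat) (x : R) : R :=
  match n with
  | O => x
  | S k => 1 / (IZR (up (bcf_rem k x)) - bcf_rem k x)
  end.

Definition bcf_digit (n : nat) (x : R) : Z := up (bcf_rem n x).

Definition good_pair (x mu : R) (pq : Z * Z) : Prop :=
  (1 <= snd pq)%Z /\ Z.gcd (fst pq) (snd pq) = 1%Z /\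
  Rabs (x - IZR (fst pq) / IZR (snd pq)) < Rpower (IZR (snd pq)) (- mu).

(* "infinitely many": not contained in any finite list *)
Definition approx_exponents (x : R) (mu : R) : Prop :=
  forall l : list (Z * Z), exists pq, good_pair x mu pq /\ ~ In pq l.

Definition irrationality_exponent (x : R) : Rbar := Lub_Rbar (approx_exponents x).

Definition G_set (alpha : R) (x : R) : Prop :=
  ~ is_rational x /\ Rbar_le (Finite alpha) (irrationality_exponent x).

Definition F_set (B : list Z) (x : R) : Prop :=
  0 < x < 1 /\ ~ is_rational x /\ forall n, (1 <= n)%nat -> In (bcf_digit n x) B.

Fixpoint nsum (k : nat) (f : nat -> nat) : nat :=
  match k with O => O | S j => (nsum j f + f j)%nat end.

Definition Mseq (p : nat) (m : nat -> nat) (k : nat) : nat :=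
  (p * nsum (S k) m)%nat.

(** M_{k-1}, with the convention M_{-1} = 0 *)
Definition Mprev (M : nat -> nat) (k : nat) : nat :=
  match k with O => O | S j => M j end.

Definition Nins (lambda : R) (M : nat -> nat) (k : nat) : nat :=
  Z.to_nat (Int_part (exp (lambda * INR (M k)))).

(** The BCF digit sequence of x is obtained from that of y by inserting,
    immediately after b_{M_k}(y), N_k copies of 2 followed by t, for every k. *)
Definition Soff (N : nat -> nat) (k : nat) : nat := nsum k (fun i => (N i + 1)%nat).

Definition is_insertion (M N : nat -> nat) (t : Z) (y x : R) : Prop :=
  (forall k n, (Mprev M k < n <= M k)%nat ->
      bcf_digit (n + Soff N k) x = bcf_digit n y) /\
  (forall k j, (1 <= j <= N k)%nat ->
      bcf_digit (M k + Soff N k + j) x = 2%Z) /\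
  (forall k, bcf_digit (M k + Soff N k + N k + 1) x = t).

Definition zlist_max (B : list Z) : Z := fold_right Z.max 0%Z B.

(* Main.v *)
Require Import Defs.
From Stdlib Require Import Reals ZArith List Lia Lra Znumtheory.
From Coquelicot Require Import Coquelicot.
Open Scope R_scope.
Open Scope R_scope.

Fixpoint cv (b : nat -> Z) (i0 i1 : Z) (n : nat) : Z * Z :=
  match n with
  | O => (i0, i1)
  | S k => let pr := cv b i0 i1 k in ((b k * fst pr - snd pr)%Z, fst pr)
  end.

Lemma cv_S b i0 i1 n : cv b i0 i1 (S n) =
  ((b n * fst (cv b i0 i1 n) - snd (cv b i0 i1 n))%Z, fst (cv b i0 i1 n)).
Proof. reflexivity. Qed.

Lemma rem_S x n : bcf_rem (S n) x = 1 / (IZR (bcf_digit n x) - bcf_rem n x).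
Proof. reflexivity. Qed.

Lemma dig_gap x n : 0 < IZR (bcf_digit n x) - bcf_rem n x <= 1.
Proof. unfold bcf_digit. destruct (archimed (bcf_rem n x)). lra. Qed.

Lemma rem_ge1 x n : 1 <= bcf_rem (S n) x.
Proof. rewrite rem_S. destruct (dig_gap x n) as [h1 h2].
  apply (Rmult_le_reg_r (IZR (bcf_digit n x) - bcf_rem n x)); auto.
  field_simplify; lra. Qed.

Lemma rem_eq x n : bcf_rem n x = IZR (bcf_digit n x) - 1 / bcf_rem (S n) x.
Proof. rewrite rem_S. destruct (dig_gap x n). field. lra. Qed.

Definition dg (x : R) (k : nat) : Z := bcf_digit k x.

Lemma mob x n :
  IZR (fst (cv (dg x) 0 (-1) n)) * bcf_rem n x - IZR (snd (cv (dg x) 0 (-1) n)) <> 0 /\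
  x = (IZR (fst (cv (dg x) 1 0 n)) * bcf_rem n x - IZR (snd (cv (dg x) 1 0 n))) /
      (IZR (fst (cv (dg x) 0 (-1) n)) * bcf_rem n x - IZR (snd (cv (dg x) 0 (-1) n))).
Proof.
  set (b := dg x).
  induction n as [|n IH].
  - simpl. split. lra. field.
  - destruct IH as [IH1 IH2]. rewrite !cv_S. simpl fst; simpl snd.
    set (q := fst (cv b 0 (-1) n)) in *. set (q' := snd (cv b 0 (-1) n)) in *.
    set (p := fst (cv b 1 0 n)) in *. set (p' := snd (cv b 1 0 n)) in *.
    pose proof (rem_ge1 x n) as hr. pose proof (rem_eq x n) as he.
    set (r' := bcf_rem (S n) x) in *. change (bcf_digit n x) with (b n) in he.
    set (r := bcf_rem n x) in *.
    rewrite !minus_IZR, !mult_IZR.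
    assert (eQ : IZR q * r - IZR q' = ((IZR (b n) * IZR q - IZR q') * r' - IZR q) / r')
      by (rewrite he; field; lra).
    assert (eP : IZR p * r - IZR p' = ((IZR (b n) * IZR p - IZR p') * r' - IZR p) / r')
      by (rewrite he; field; lra).
    assert (hD : (IZR (b n) * IZR q - IZR q') * r' - IZR q <> 0).
    { intro h. apply IH1. rewrite eQ, h. field. lra. }
    split; auto. rewrite IH2, eQ, eP. clearbody b r r'. clear -hD hr. field. split; [exact hD|lra].
Qed.

Lemma det_cv b n :
  (fst (cv b 1 0 n) * snd (cv b 0 (-1) n) - snd (cv b 1 0 n) * fst (cv b 0 (-1) n) = -1)%Z.
Proof. induction n. simpl. lia. rewrite !cv_S. simpl fst; simpl snd.
  set (a1 := fst (cv b 1 0 n)) in *. set (a2 := snd (cv b 1 0 n)) in *.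
  set (a3 := fst (cv b 0 (-1) n)) in *. set (a4 := snd (cv b 0 (-1) n)) in *.
  clearbody a1 a2 a3 a4. rewrite <- IHn. ring. Qed.

Open Scope Z_scope.
Open Scope Z_scope.

Definition Qn b n := fst (cv b 0 (-1) n).
Definition Qm b n := snd (cv b 0 (-1) n).
Definition dd b n := Qn b n - Qm b n.
Definition Sq b n := Qn b n + dd b n.

Lemma Qn_S b n : Qn b (S n) = b n * Qn b n - Qm b n.
Proof. reflexivity. Qed.
Lemma Qm_S b n : Qm b (S n) = Qn b n.
Proof. reflexivity. Qed.


Lemma Qpos (b : nat -> Z) (D : Z) (Hb : forall k, (1 <= k)%nat -> 2 <= b k <= D) n : (1 <= n)%nat -> 1 <= Qn b n /\ 1 <= dd b n.
Proof.
  induction n as [|n IH]; intro h. lia.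
  destruct n as [|n].
  - unfold dd, Qn, Qm; simpl. lia.
  - destruct IH as [h1 h2]. lia. specialize (Hb (S n) ltac:(lia)).
    unfold dd in *. rewrite Qn_S. rewrite !Qm_S in *.
    assert (0 <= (b (S n) - 2) * Qn b (S n)) by (apply Z.mul_nonneg_nonneg; lia). nia.
Qed.

Lemma dd_S (b : nat -> Z) n : (1 <= n)%nat -> dd b (S n) = (b n - 2) * Qn b n + dd b n.
Proof. intro. unfold dd. rewrite Qn_S, Qm_S. ring. Qed.

Lemma Sq_step (b : nat -> Z) (D : Z) (Hb : forall k, (1 <= k)%nat -> 2 <= b k <= D) n : (1 <= n)%nat -> Sq b (S n) <= Z.max 2 (2*D-3) * Sq b n.
Proof.
  intro h. pose proof (Qpos b D Hb n h). pose proof (Hb n h).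
  unfold Sq. rewrite dd_S by lia. rewrite Qn_S.
  replace (b n * Qn b n - Qm b n) with ((b n - 1) * Qn b n + dd b n) by (unfold dd; ring).
  assert (2 * b n - 3 <= Z.max 2 (2*D-3)) by lia.
  assert (2 <= Z.max 2 (2*D-3)) by lia.
  assert (0 <= (Z.max 2 (2*D-3) - (2*b n - 3)) * Qn b n) by (apply Z.mul_nonneg_nonneg; lia).
  assert (0 <= (Z.max 2 (2*D-3) - 2) * dd b n) by (apply Z.mul_nonneg_nonneg; lia). nia.
Qed.

Lemma Sq_pow (b : nat -> Z) (D : Z) (Hb : forall k, (1 <= k)%nat -> 2 <= b k <= D) n j : (1 <= n)%nat -> Sq b (n + j)%nat <= Z.max 2 (2*D-3) ^ Z.of_nat j * Sq b n.
Proof.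
  intro h. induction j as [|j IH].
  - rewrite Nat.add_0_r. simpl Z.of_nat. rewrite Z.pow_0_r. lia.
  - rewrite Nat.add_succ_r, Nat2Z.inj_succ, Z.pow_succ_r by lia.
    pose proof (Sq_step b D Hb (n+j)%nat ltac:(lia)).
    assert (0 <= Z.max 2 (2*D-3) ^ Z.of_nat j) by (apply Z.pow_nonneg; lia).
    assert (2 <= Z.max 2 (2*D-3)) by lia. nia.
Qed.

Lemma Sq_run (b : nat -> Z) (D : Z) (Hb : forall k, (1 <= k)%nat -> 2 <= b k <= D) n j : (1 <= n)%nat -> (forall i, (i < j)%nat -> b (n + i)%nat = 2) ->
  Sq b (n + j)%nat <= (Z.of_nat j + 1) * Sq b n.
Proof.
  intros h hr.
  assert (H : Qn b (n+j)%nat = Qn b n + Z.of_nat j * dd b n /\ dd b (n+j)%nat = dd b n).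
  { induction j as [|j IH].
    - rewrite Nat.add_0_r. lia.
    - destruct IH as [e1 e2]. intros i hi; apply hr; lia.
      rewrite Nat.add_succ_r. rewrite dd_S by lia. rewrite Qn_S.
      rewrite hr by lia. replace (Qm b (n+j)%nat) with (Qn b (n+j)%nat - dd b (n+j)%nat) by (unfold dd; ring).
      rewrite e1, e2. split; lia. }
  destruct H as [e1 e2]. unfold Sq. rewrite e1, e2. pose proof (Qpos b D Hb n h). nia.
Qed.

Lemma dd_mono (b : nat -> Z) (D : Z) (Hb : forall k, (1 <= k)%nat -> 2 <= b k <= D) n j : (1 <= n)%nat -> dd b n <= dd b (n + j)%nat.
Proof.
  intro h. induction j. rewrite Nat.add_0_r; lia.
  rewrite Nat.add_succ_r, dd_S by lia. pose proof (Qpos b D Hb (n+j)%nat ltac:(lia)).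
  pose proof (Hb (n+j)%nat ltac:(lia)).
  assert (0 <= (b (n+j)%nat - 2) * Qn b (n+j)%nat) by (apply Z.mul_nonneg_nonneg; lia). lia.
Qed.

Lemma dd_inc (b : nat -> Z) (D : Z) (Hb : forall k, (1 <= k)%nat -> 2 <= b k <= D) n : (1 <= n)%nat -> 3 <= b n -> dd b n + 1 <= dd b (S n).
Proof. intros h h3. rewrite dd_S by lia. pose proof (Qpos b D Hb n h).
  assert (Qn b n <= (b n - 2) * Qn b n) by nia. lia. Qed.

Lemma dd_le_Sq (b : nat -> Z) (D : Z) (Hb : forall k, (1 <= k)%nat -> 2 <= b k <= D) n : (1 <= n)%nat -> dd b n <= Sq b n.
Proof. intro h. pose proof (Qpos b D Hb n h). unfold Sq. lia. Qed.

Open Scope nat_scope.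
Open Scope nat_scope.

Lemma Soff_S N k : Soff N (S k) = (Soff N k + (N k + 1))%nat.
Proof. reflexivity. Qed.

Lemma cover (M N : nat -> nat) (P : nat -> Prop) :
  (forall k n, (Mprev M k < n <= M k)%nat -> P (n + Soff N k)%nat) ->
  (forall k j, (1 <= j <= N k)%nat -> P (M k + Soff N k + j)%nat) ->
  (forall k, P (M k + Soff N k + N k + 1)%nat) ->
  forall k n, (1 <= n <= M k + Soff N (S k))%nat -> P n.
Proof.
  intros H1 H2 H3 k. induction k as [|k IH]; intros n hn.
  - rewrite Soff_S in hn. simpl in hn.
    destruct (le_lt_dec n (M 0)) as [a|a].
    + replace n with (n + Soff N 0)%nat by (change (Soff N 0) with 0; lia). apply H1. simpl Mprev. lia.
    + destruct (le_lt_dec n (M 0 + N 0)) as [c|c].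
      * replace n with (M 0 + Soff N 0 + (n - M 0))%nat by (change (Soff N 0) with 0; lia). apply H2. lia.
      * replace n with (M 0 + Soff N 0 + N 0 + 1)%nat by (change (Soff N 0) with 0; lia). apply H3.
  - destruct (le_lt_dec n (M k + Soff N (S k))) as [a|a]. apply IH; lia.
    rewrite Soff_S in hn.
    destruct (le_lt_dec n (M (S k) + Soff N (S k))) as [b|b].
    + replace n with ((n - Soff N (S k)) + Soff N (S k))%nat by lia. apply H1. simpl Mprev. lia.
    + destruct (le_lt_dec n (M (S k) + Soff N (S k) + N (S k))) as [c|c].
      * replace n with (M (S k) + Soff N (S k) + (n - M (S k) - Soff N (S k)))%nat by lia.
        apply H2. lia.
      * replace n with (M (S k) + Soff N (S k) + N (S k) + 1)%nat by lia. apply H3.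
Qed.

Lemma nsum_ge k (m : nat -> nat) : (forall i, 0 < m i)%nat -> (k <= nsum k m)%nat.
Proof. intro h. induction k; simpl. lia. specialize (h k). lia. Qed.

Lemma Mseq_ge p m k : (forall i, 0 < m i)%nat -> (p * S k <= Mseq p m k)%nat.
Proof. intro h. unfold Mseq. pose proof (nsum_ge (S k) m h). apply Nat.mul_le_mono_l; assumption. Qed.

Lemma Mseq_mono p m k : (Mseq p m k <= Mseq p m (S k))%nat.
Proof. unfold Mseq. change (nsum (S (S k)) m) with (nsum (S k) m + m (S k)). nia. Qed.

Lemma Mprev_le p m k : (Mprev (Mseq p m) k <= Mseq p m k)%nat.
Proof. destruct k; simpl. lia. apply Mseq_mono. Qed.

Open Scope R_scope.
Open Scope R_scope.

Lemma ln_sqrt2_Lp1 L : 0 < L + 1 -> ln (sqrt 2 * (L + 1)) = ln 2 / 2 + ln (L + 1).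
Proof.
  intro h. assert (hs : 0 < sqrt 2) by (apply sqrt_lt_R0; lra).
  rewrite ln_mult by lra.
  assert (e : ln 2 = 2 * ln (sqrt 2)).
  { rewrite <- (sqrt_sqrt 2) at 1 by lra. rewrite ln_mult by lra. ring. }
  lra.
Qed.

Lemma key_F F L : 2 <= F <= 2 * L + 1 -> 2 <= L ->
  ln F + (ln 2 + ln F) / 2 <= ln 2 + 2 * ln (L + 1).
Proof.
  intros hF hL.
  assert (h : ln (2 * F ^ 3) <= ln (4 * (L + 1) ^ 4)).
  { apply ln_le. assert (0 < F ^ 3) by (apply pow_lt; lra). lra.
    assert (F ^ 3 <= (2*L+1)^3).
    { apply pow_incr. lra. }
    assert (2 * (2*L+1)^3 <= 4 * (L+1)^4).
    { assert (0 <= L - 2) by lra. simpl. nra. }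
    lra. }
  rewrite !ln_mult, !ln_pow in h by (try apply pow_lt; lra).
  replace (ln 4) with (2 * ln 2) in h.
  2: { replace 4 with (2*2) by lra. rewrite ln_mult by lra. ring. }
  simpl INR in h. lra.
Qed.

Lemma final_ineq (c Nn F L lam alpha Mk kk : R) :
  1 <= c -> 2 <= F <= 2 * L + 1 -> 2 <= L -> 0 < lam -> 2 < alpha ->
  2 * (alpha - 2) * ln (sqrt 2 * (L + 1)) + (alpha - 2) * lam <= lam / 2 ->
  ln c <= ln 2 + Mk * ln F + kk * ln (2 * F) + lam * Mk ->
  2 * kk <= Mk -> 0 <= kk ->
  lam * Mk - ln 2 <= ln Nn ->
  3 * ln 2 <= lam * Mk ->
  (alpha - 2) * ln c <= ln Nn.
Proof.
  intros hc hF hL hl ha hI hlc hk hk0 hN hM.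
  rewrite ln_sqrt2_Lp1 in hI by lra.
  pose proof (key_F F L hF hL) as hK.
  assert (h2 : 0 < ln 2) by (pose proof ln_lt_2; lra).
  assert (hF0 : 0 <= ln F) by (rewrite <- ln_1; apply ln_le; lra).
  rewrite ln_mult in hlc by lra.
  assert (hL1 : 0 <= ln (L+1)) by (rewrite <- ln_1; apply ln_le; lra).
  set (X := ln 2 + 2 * ln (L + 1)) in *.
  assert (hkk : kk * (ln 2 + ln F) <= Mk / 2 * (ln 2 + ln F))
    by (apply Rmult_le_compat_r; lra).
  assert (hc2 : ln c <= ln 2 + Mk * (X + lam)).
  { assert (Mk * (ln F + (ln 2 + ln F) / 2) <= Mk * X)
      by (apply Rmult_le_compat_l; lra). lra. }
  set (A := alpha - 2) in *.
  assert (hA : A * (X + lam) <= lam / 2) by (unfold X; lra).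
  assert (hA2 : A <= 1/2).
  { assert (0 <= A * X) by (apply Rmult_le_pos; unfold A, X; lra).
    assert (A * lam <= lam / 2) by lra.
    apply (Rmult_le_reg_r lam); lra. }
  assert (Mk * (A * (X + lam)) <= Mk * (lam / 2)) by (apply Rmult_le_compat_l; lra).
  assert (A * ln c <= A * (ln 2 + Mk * (X + lam))) by (apply Rmult_le_compat_l; unfold A; lra).
  assert (A * ln 2 <= ln 2 / 2) by nra.
  nra.
Qed.
Open Scope R_scope.

Lemma run_rem x n Nn :
  (forall j, (1 <= j <= Nn)%nat -> bcf_digit (n + j) x = 2%Z) ->
  (3 <= bcf_digit (n + Nn + 1) x)%Z ->
  1 < bcf_rem (S n) x /\ INR Nn < 1 / (bcf_rem (S n) x - 1).
Proof.
  intros h2 h3.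
  assert (H : forall i, (i <= Nn)%nat ->
     1 < bcf_rem (S n + (Nn - i)) x /\ INR i < 1 / (bcf_rem (S n + (Nn - i)) x - 1)).
  { induction i as [|i IH]; intro hi.
    - replace (S n + (Nn - 0))%nat with (n + Nn + 1)%nat by lia.
      pose proof (dig_gap x (n + Nn + 1)) as [g1 g2].
      apply IZR_le in h3. simpl INR. split. lra.
      apply Rdiv_lt_0_compat; lra.
    - destruct IH as [r1 r2]. lia.
      set (j := (S n + (Nn - S i))%nat).
      assert (ej : (S n + (Nn - i))%nat = S j) by (unfold j; lia).
      rewrite ej in r1, r2.
      pose proof (rem_eq x j) as he.
      assert (hj : bcf_digit j x = 2%Z)
        by (replace j with (n + (Nn - i))%nat by (unfold j; lia); apply h2; lia).
      rewrite hj in he.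
      set (r := bcf_rem (S j) x) in *. set (r0 := bcf_rem j x) in *.
      assert (e1 : r0 - 1 = (r - 1) / r) by (rewrite he; field; lra).
      assert (hpos : 0 < r0 - 1) by (rewrite e1; apply Rdiv_lt_0_compat; lra).
      split. lra.
      assert (e2 : 1 / (r0 - 1) = 1 + 1 / (r - 1)) by (rewrite e1; field; lra).
      rewrite e2, S_INR. lra. }
  specialize (H Nn (le_n _)). replace (S n + (Nn - Nn))%nat with (S n) in H by lia. exact H.
Qed.

Lemma approx_err x n Nn alpha :
  1 < bcf_rem (S n) x -> 1 <= Nn -> Nn * (bcf_rem (S n) x - 1) < 1 ->
  (1 <= Qn (dg x) (S n))%Z -> (1 <= dd (dg x) (S n))%Z ->
  (alpha - 2) * ln (IZR (dd (dg x) (S n))) <= ln Nn ->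
  Rabs (x - IZR (fst (cv (dg x) 1 0 (S n)) - snd (cv (dg x) 1 0 (S n))) / IZR (dd (dg x) (S n)))
   < Rpower (IZR (dd (dg x) (S n))) (- alpha).
Proof.
  intros hr hN hNr hQ hd hln.
  destruct (mob x (S n)) as [m1 m2].
  pose proof (det_cv (dg x) (S n)) as hdet.
  unfold dd, Qn, Qm in *.
  set (q := fst (cv (dg x) 0 (-1) (S n))) in *. set (q' := snd (cv (dg x) 0 (-1) (S n))) in *.
  set (p := fst (cv (dg x) 1 0 (S n))) in *. set (p' := snd (cv (dg x) 1 0 (S n))) in *.
  set (r := bcf_rem (S n) x) in *.
  apply IZR_le in hQ. apply IZR_le in hd. rewrite !minus_IZR in *.
  assert (hdetR : IZR p * IZR q' - IZR p' * IZR q = -1).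
  { rewrite <- !mult_IZR, <- minus_IZR, hdet. reflexivity. }
  set (c := IZR q - IZR q') in *.
  assert (hD : c <= IZR q * r - IZR q') by (unfold c; nra).
  assert (err : x - (IZR p - IZR p') / c = (r - 1) / (c * (IZR q * r - IZR q'))).
  { rewrite m2. field_simplify_eq; [unfold c; nra | split; lra]. }
  rewrite err. rewrite Rabs_pos_eq.
  2: { apply Rlt_le, Rdiv_lt_0_compat. lra. apply Rmult_lt_0_compat; lra. }
  apply Rle_lt_trans with ((r - 1) / (c * c)).
  { apply Rmult_le_compat_l. lra. apply Rinv_le_contravar. nra.
    apply Rmult_le_compat_l; lra. }
  apply Rlt_le_trans with (1 / (Nn * (c * c))).
  { replace ((r-1)/(c*c)) with (Nn*(r-1)/(Nn*(c*c))) by (field; lra).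
    unfold Rdiv; apply Rmult_lt_compat_r; [apply Rinv_0_lt_compat; nra| lra]. }
  unfold Rpower.
  replace (1 / (Nn * (c * c))) with (exp (- (ln Nn + 2 * ln c))).
  2: { rewrite exp_Ropp, exp_plus, exp_ln by lra.
       replace (2 * ln c) with (ln c + ln c) by ring. rewrite exp_plus, exp_ln by lra.
       field. split; lra. }
  assert (hh : -(ln Nn + 2*ln c) <= -alpha * ln c) by lra.
  destruct hh as [hh|hh]; [apply Rlt_le, exp_increasing, hh | rewrite hh; lra].
Qed.
Open Scope R_scope.

Fixpoint prodN (N : nat -> nat) (k : nat) : R :=
  match k with O => 1 | S j => prodN N j * (INR (N j) + 1) end.

Lemma Nins_bounds lambda M k : 0 < lambda ->
  1 <= INR (Nins lambda M k) /\ INR (Nins lambda M k) <= exp (lambda * INR (M k)) /\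
  exp (lambda * INR (M k)) - 1 < INR (Nins lambda M k).
Proof.
  intro hl. unfold Nins. set (e := exp (lambda * INR (M k))).
  assert (he : 1 <= e).
  { pose proof (exp_ineq1_le (lambda * INR (M k))). pose proof (pos_INR (M k)).
    assert (0 <= lambda * INR (M k)) by (apply Rmult_le_pos; lra). unfold e; lra. }
  destruct (base_Int_part e) as [b1 b2].
  assert (hz : (1 <= Int_part e)%Z).
  { assert (0 < IZR (Int_part e)) by lra. apply lt_IZR in H. lia. }
  rewrite INR_IZR_INZ, Z2Nat.id by lia. apply IZR_le in hz. lra.
Qed.

Lemma prodN_ln lambda M k : 0 < lambda ->
  0 < prodN (Nins lambda M) k /\
  ln (prodN (Nins lambda M) k) <= INR k * ln 2 + lambda * INR (nsum k M).
Proof.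
  intro hl. induction k as [|k [IH1 IH2]].
  - simpl. rewrite ln_1. lra.
  - simpl prodN. simpl nsum. destruct (Nins_bounds lambda M k hl) as [n1 [n2 n3]].
    split. apply Rmult_lt_0_compat; lra.
    rewrite ln_mult by lra. rewrite plus_INR, S_INR.
    assert (ln (INR (Nins lambda M k) + 1) <= ln 2 + lambda * INR (M k)).
    { replace (ln 2 + lambda * INR (M k)) with (ln (2 * exp (lambda * INR (M k))))
        by (rewrite ln_mult, ln_exp; [ring| lra | apply exp_pos]).
      apply ln_le; lra. }
    nra.
Qed.

Lemma zmax_ge B b : In b B -> (b <= zlist_max B)%Z.
Proof. induction B; simpl. tauto. intros [h|h]. subst; lia. specialize (IHB h). lia. Qed.

Lemma fold_max_ge (l : list (Z * Z)) pq : In pq l ->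
  (snd pq <= fold_right (fun pq acc => Z.max (snd pq) acc) 0 l)%Z.
Proof. induction l; simpl. tauto. intros [h|h]. subst; lia. specialize (IHl h). lia. Qed.
Open Scope R_scope.

Theorem lemma3p1
  (B : list Z) (t : Z) (p : nat) (W : list (list Z)) (m : nat -> nat)
  (lambda alpha y x : R)
  (HB : forall b, In b B -> (2 <= b)%Z)
  (H2B : In 2%Z B)
  (HtB : In t B) (Ht2 : t <> 2%Z)
  (Hp : (2 <= p)%nat)
  (HWne : W <> nil)
  (HW : forall w, In w W ->
          length w = p /\ (forall b, In b w -> In b B) /\ last w 0%Z <> 2%Z)
  (Hm : forall i, (0 < m i)%nat)
  (HM : forall k, (1 <= k)%nat ->
          (nsum k (Mseq p m) <= Mseq p m k)%nat /\
          INR (Mseq p m (k - 1)%nat) / 2 <= INR (Mseq p m k))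
  (Hlam : 0 < lambda)
  (Halpha : 2 < alpha)
  (Hineq : let L := Rmax (IZR (zlist_max B - 2)) (INR p) in
           2 * (alpha - 2) * ln (sqrt 2 * (L + 1)) + (alpha - 2) * lambda
             <= lambda / 2)
  (Hy01 : 0 < y < 1) (Hyirr : ~ is_rational y)
  (Hyw : exists ws : nat -> list Z, (forall k, In (ws k) W) /\
           forall k j, (j < p)%nat ->
             bcf_digit (k * p + j + 1) y = nth j (ws k) 0%Z)
  (Hx01 : 0 < x < 1) (Hxirr : ~ is_rational x)
  (Hx : is_insertion (Mseq p m) (Nins lambda (Mseq p m)) t y x) :
  G_set alpha x /\ F_set B x.
Proof.
Proof.
  destruct Hx as [Hx1 [Hx2 Hx3]].
  set (M := Mseq p m) in *. set (N := Nins lambda M) in *.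
  assert (Ht3 : (3 <= t)%Z) by (pose proof (HB t HtB); lia).
  set (D := zlist_max B) in *.
  assert (HyB : forall n, (1 <= n)%nat -> In (bcf_digit n y) B).
  { destruct Hyw as [ws [hws hd]]. intros n hn.
    assert (e : n = ((n-1)/p * p + (n-1) mod p + 1)%nat).
    { pose proof (Nat.div_mod_eq (n-1) p) as hdm. rewrite Nat.mul_comm in hdm. lia. }
    rewrite e, hd by (apply Nat.mod_upper_bound; lia).
    destruct (HW _ (hws ((n-1)/p)%nat)) as [hl [hin _]]. apply hin, nth_In. rewrite hl.
    apply Nat.mod_upper_bound; lia. }
  assert (HxB : forall n, (1 <= n)%nat -> In (bcf_digit n x) B).
  { intros n hn. apply (cover M N (fun n => (1 <= n)%nat -> In (bcf_digit n x) B)) with (k := n); auto.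
    - intros k n' hk _. rewrite Hx1 by exact hk. apply HyB. lia.
    - intros k j hj _. rewrite Hx2 by exact hj. exact H2B.
    - intros k _. rewrite Hx3. exact HtB.
    - split; auto. pose proof (Mseq_ge p m n Hm). fold M in H. nia. }
  split; [| split; [exact Hx01 | split; [exact Hxirr | exact HxB]]].
  split; [exact Hxirr |].
  destruct (Lub_Rbar_correct (approx_exponents x)) as [ub _]. apply ub. intro l.
  set (b := dg x).
  assert (Hbx : forall k, (1 <= k)%nat -> (2 <= b k <= D)%Z).
  { intros k hk. unfold b, dg. pose proof (HxB k hk). split. apply HB; auto. apply zmax_ge; auto. }
  set (Fz := Z.max 2 (2*D-3)). set (F := IZR Fz).
  assert (HF2 : 2 <= F) by (unfold F; apply IZR_le; unfold Fz; lia).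
  assert (Hrun : forall k i, (i < N k)%nat -> b (M k + Soff N k + 1 + i)%nat = 2%Z).
  { intros k i hi. unfold b, dg. replace (M k + Soff N k + 1 + i)%nat with (M k + Soff N k + S i)%nat by lia.
    apply Hx2. lia. }
  assert (Hdd : forall k, (Z.of_nat k + 1 <= dd b (S (M k + Soff N k)))%Z).
  { induction k as [|k IH].
    - pose proof (dd_mono b D Hbx 1%nat (M 0%nat + Soff N 0%nat)%nat (le_n _)).
      replace (dd b 1%nat) with 1%Z in H by (unfold dd, Qn, Qm; simpl; ring). simpl Z.of_nat. exact H.
    - set (i0 := (M k + Soff N k + N k + 1)%nat).
      assert (hi0 : (3 <= b i0)%Z) by (unfold b, dg, i0; rewrite Hx3; lia).
      pose proof (dd_inc b D Hbx i0 ltac:(unfold i0; lia) hi0) as h1.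
      pose proof (dd_mono b D Hbx (S (M k + Soff N k)) (N k) ltac:(lia)) as h2.
      replace (S (M k + Soff N k) + N k)%nat with i0 in h2 by (unfold i0; lia).
      pose proof (Mseq_mono p m k) as hmo. fold M in hmo.
      pose proof (dd_mono b D Hbx (S i0) (M (S k) - M k) ltac:(lia)) as h3.
      replace (S i0 + (M (S k) - M k))%nat with (S (M (S k) + Soff N (S k))) in h3
        by (unfold i0; rewrite Soff_S; lia).
      lia. }
  assert (HSq0 : forall n, (1 <= n)%nat -> 0 <= IZR (Sq b n)).
  { intros n hn. apply IZR_le. pose proof (Qpos b D Hbx n hn). unfold Sq. lia. }
  assert (HFpow : forall j, 0 <= F ^ j) by (intro; apply pow_le; lra).
  assert (Hstep : forall k, IZR (Sq b (S (M k + Soff N k))) <=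
                  F ^ (M k - Mprev M k) * IZR (Sq b (Mprev M k + Soff N k + 1))).
  { intro k. pose proof (Mprev_le p m k) as hle. fold M in hle.
    pose proof (Sq_pow b D Hbx (Mprev M k + Soff N k + 1) (M k - Mprev M k) ltac:(lia)) as h.
    replace (Mprev M k + Soff N k + 1 + (M k - Mprev M k))%nat with (S (M k + Soff N k)) in h by lia.
    apply IZR_le in h. rewrite mult_IZR, <- pow_IZR in h. exact h. }
  assert (Hblk : forall k, IZR (Sq b (Mprev M k + Soff N k + 1)) <=
                  2 * F ^ (Mprev M k + k) * prodN N k).
  { induction k as [|k IH].
    - simpl. replace (Sq b 1%nat) with 2%Z by (unfold Sq, dd, Qn, Qm; simpl; ring). lra.
    - set (n0 := (M k + Soff N k)%nat).
      pose proof (Hstep k) as h1. fold n0 in h1.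
      pose proof (Sq_run b D Hbx (S n0) (N k) ltac:(lia)) as h2.
      assert (h2' : IZR (Sq b (S n0 + N k)) <= (INR (N k) + 1) * IZR (Sq b (S n0))).
      { apply IZR_le in h2. rewrite mult_IZR, plus_IZR, <- INR_IZR_INZ in h2. apply h2.
        intros i hi. replace (S n0 + i)%nat with (M k + Soff N k + 1 + i)%nat by (unfold n0; lia).
        apply Hrun; exact hi. }
      pose proof (Sq_step b D Hbx (S n0 + N k) ltac:(lia)) as h3.
      apply IZR_le in h3. rewrite mult_IZR in h3. fold Fz F in h3.
      replace (Mprev M (S k) + Soff N (S k) + 1)%nat with (S (S n0 + N k)) by
        (unfold n0; simpl Mprev; rewrite Soff_S; lia).
      pose proof (Mprev_le p m k) as hle. fold M in hle.
      replace (Mprev M (S k) + S k)%nat with ((M k - Mprev M k) + (Mprev M k + k) + 1)%nat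
        by (simpl Mprev; lia).
      rewrite (pow_add F ((M k - Mprev M k) + (Mprev M k + k)) 1), (pow_add F (M k - Mprev M k) (Mprev M k + k)).
      simpl prodN.
      pose proof (pos_INR (N k)).
      assert (0 <= prodN N k) by (apply Rlt_le, (proj1 (prodN_ln lambda M k Hlam))).
      pose proof (HFpow (M k - Mprev M k)%nat). pose proof (HFpow (Mprev M k + k)%nat).
      pose proof (HSq0 (S n0) ltac:(lia)). pose proof (HSq0 (Mprev M k + Soff N k + 1)%nat ltac:(lia)).
      pose proof (HSq0 (S n0 + N k)%nat ltac:(lia)).
      set (A := IZR (Sq b (Mprev M k + Soff N k + 1))) in *.
      set (G1 := F ^ (M k - Mprev M k)) in *. set (G2 := F ^ (Mprev M k + k)) in *.
      assert (e1 : IZR (Sq b (S n0)) <= G1 * (2 * G2 * prodN N k)).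
      { apply Rle_trans with (G1 * A). exact h1. apply Rmult_le_compat_l; lra. }
      assert (e2 : IZR (Sq b (S n0 + N k)) <= (INR (N k) + 1) * (G1 * (2 * G2 * prodN N k))).
      { apply Rle_trans with ((INR (N k) + 1) * IZR (Sq b (S n0))). exact h2'.
        apply Rmult_le_compat_l; lra. }
      apply Rle_trans with (F * IZR (Sq b (S n0 + N k))). exact h3.
      simpl pow. apply Rle_trans with (F * ((INR (N k) + 1) * (G1 * (2 * G2 * prodN N k)))).
      apply Rmult_le_compat_l; lra. right; ring. }
  set (Bl := fold_right (fun pq acc => Z.max (snd pq) acc) 0%Z l).
  set (K0 := Z.to_nat (up (3 * ln 2 / lambda))).
  set (k := S (Z.to_nat Bl + K0)).
  set (n0 := (M k + Soff N k)%nat).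
  set (c := dd b (S n0)).
  set (a := (fst (cv b 1 0 (S n0)) - snd (cv b 1 0 (S n0)))%Z).
  exists (a, c).
  pose proof (Qpos b D Hbx (S n0) ltac:(lia)) as hQ.
  destruct (run_rem x n0 (N k)) as [hr1 hr2].
  { intros j hj. apply Hx2; exact hj. }
  { unfold n0; rewrite Hx3; lia. }
  destruct (Nins_bounds lambda M k Hlam) as [hN1 [hN2 hN3]]. fold N in hN1, hN2, hN3.
  split.
  2: { intro hin. apply fold_max_ge in hin. simpl snd in hin. fold Bl in hin.
       pose proof (Hdd k) as hk. fold n0 in hk. fold c in hk. unfold k in hk. lia. }
  unfold good_pair. simpl fst; simpl snd. split; [lia|]. split.
  { apply Zgcd_1_rel_prime, bezout_rel_prime.
    apply Bezout_intro with (u := (- Qm b (S n0))%Z) (v := snd (cv b 1 0 (S n0))).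
    pose proof (det_cv b (S n0)). unfold a, c, dd, Qn, Qm in *. nia. }
  assert (hr : 0 < bcf_rem (S n0) x - 1) by lra.
  apply approx_err with (Nn := INR (N k)); auto.
  - apply (Rmult_lt_reg_r (/ (bcf_rem (S n0) x - 1))). apply Rinv_0_lt_compat; lra.
    field_simplify; try lra.
  - exact (proj1 hQ).
  - exact (proj2 hQ).
  - fold b c. cbv zeta in Hineq.
    set (L := Rmax (IZR (zlist_max B - 2)) (INR p)) in *.
    assert (hp2 : 2 <= INR p) by (replace 2 with (INR 2) by (simpl; ring); apply le_INR; lia).
    assert (hL2 : 2 <= L) by (unfold L; pose proof (Rmax_r (IZR (zlist_max B - 2)) (INR p)); lra).
    assert (hFL : F <= 2 * L + 1).
    { unfold F, Fz. pose proof (Rmax_l (IZR (zlist_max B - 2)) (INR p)). fold L in H.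
      fold D in H. rewrite minus_IZR in H.
      destruct (Z.max_spec 2 (2*D-3)) as [[_ e]|[_ e]]; rewrite e.
      rewrite minus_IZR, mult_IZR. lra. lra. }
    pose proof (Mseq_ge p m k Hm) as hMk. fold M in hMk.
    assert (hMk' : 2 * INR k <= INR (M k)).
    { replace 2 with (INR 2) by (simpl; ring). rewrite <- mult_INR. apply le_INR. nia. }
    assert (hk1 : (1 <= k)%nat) by (unfold k; lia).
    assert (hup : 3 * ln 2 <= lambda * INR (M k)).
    { destruct (archimed (3 * ln 2 / lambda)) as [u1 _].
      assert (h0 : 0 < 3 * ln 2 / lambda).
      { apply Rdiv_lt_0_compat; auto. pose proof ln_lt_2. lra. }
      assert (hK : IZR (up (3 * ln 2 / lambda)) <= INR k).
      { unfold k. rewrite <- (Z2Nat.id (up (3 * ln 2 / lambda))).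
        2: { apply le_IZR. lra. }
        rewrite <- INR_IZR_INZ. apply le_INR. unfold K0. lia. }
      pose proof (pos_INR k).
      assert (3 * ln 2 / lambda <= INR (M k)) by lra.
      apply (Rmult_le_compat_l lambda) in H0; [|lra].
      replace (lambda * (3 * ln 2 / lambda)) with (3 * ln 2) in H0 by (field; lra). exact H0. }
    apply final_ineq with (F := F) (L := L) (lam := lambda) (Mk := INR (M k)) (kk := INR k); auto.
    + apply IZR_le. exact (proj2 hQ).
    + pose proof (dd_le_Sq b D Hbx (S n0) ltac:(lia)) as hc. fold c in hc. apply IZR_le in hc.
      pose proof (Hstep k) as h1. fold n0 in h1. pose proof (Hblk k) as h2.
      destruct (prodN_ln lambda M k Hlam) as [hP1 hP2]. fold N in hP1, hP2.
      pose proof (HM k hk1) as [hM1 _]. apply le_INR in hM1.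
      pose proof (Mprev_le p m k) as hle. fold M in hle.
      pose proof (HFpow (M k - Mprev M k)%nat).
      assert (hb : IZR c <= 2 * F ^ (M k + k) * prodN N k).
      { replace (M k + k)%nat with ((M k - Mprev M k) + (Mprev M k + k))%nat by lia.
        rewrite pow_add.
        apply Rle_trans with (F ^ (M k - Mprev M k) * (2 * F ^ (Mprev M k + k) * prodN N k)).
        apply Rle_trans with (F ^ (M k - Mprev M k) * IZR (Sq b (Mprev M k + Soff N k + 1))).
        lra. apply Rmult_le_compat_l; lra. right; ring. }
      assert (hc1 : 1 <= IZR c) by (apply IZR_le; exact (proj2 hQ)).
      assert (hFp : 0 < F ^ (M k + k)) by (apply pow_lt; lra).
      apply Rle_trans with (ln (2 * F ^ (M k + k) * prodN N k)).
      apply ln_le; lra.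
      rewrite (ln_mult (2 * F ^ (M k + k)) (prodN N k)). 2: { apply Rmult_lt_0_compat; lra. } 2: { lra. }
      rewrite (ln_mult 2 (F ^ (M k + k))) by lra.
      rewrite (ln_pow F (M k + k)) by lra.
      rewrite plus_INR.
      assert (lnF : 0 <= ln F) by (rewrite <- ln_1; apply ln_le; lra).
      assert (lambda * INR (nsum k M) <= lambda * INR (M k)) by (apply Rmult_le_compat_l; lra).
      rewrite (ln_mult 2 F) by lra. lra.
    + apply pos_INR.
    + assert (INR (N k) + INR (N k) > exp (lambda * INR (M k))) by lra.
      rewrite <- (ln_exp (lambda * INR (M k))) at 1.
      replace (ln (exp (lambda * INR (M k))) - ln 2) with (ln (exp (lambda * INR (M k)) / 2)).
      2: { unfold Rdiv. rewrite ln_mult, ln_Rinv; try lra; apply exp_pos. }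
      apply ln_le. pose proof (exp_pos (lambda * INR (M k))). lra. lra.
Qed.
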